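(* Let $t\ge2$ be an integer and let $p\in\mathcal{P}_1\cup\mathcal{P}_2\cup\mathcal{P}_3\cup\mathcal{P}_4$. Then for every integer $m$ with $\chi_t(mp)\ne0$, $$\chi_t(mp)=\begin{cases}\chi_t(m),& p\in\mathcal{P}_1\cup\mathcal{P}_2,\\ -\chi_t(m),& p\in\mathcal{P}_3\cup\mathcal{P}_4.\end{cases}$$
   Context: $\chi_t$ is the function of period $3\cdot2^{t+1}$ with $\chi_t(n)=1$ if $n\equiv 2^{t+1}-3$ or $3+2^{t+2}$, $\chi_t(n)=-1$ if $n\equiv 2^{t+1}+3$ or $2^{t+2}-3\pmod{3\cdot2^{t+1}}$, and $0$ otherwise. $\mathcal{P}_1$ is the set of primes $p\equiv1\pmod{3\cdot2^{t+1}}$; $\mathcal{P}_2$ the set of primes $p\equiv3\cdot2^{t+1}-1\pmod{3\cdot2^{t+1}}$; $\mathcal{P}_3$ the set of primes $p\equiv r_1(t)\pmod{3\cdot2^{t+1}}$ where $r_1(t)=2^{t+1}-1$ if $t$ is even and $2^{t+1}+1$ if $t$ is odd; $\mathcal{P}_4$ the set of primes $p\equiv r_2(t)\pmod{3\cdot2^{t+1}}$ where $r_2(t)=2^{t+2}+1$ if $t$ is even and $2^{t+2}-1$ if $t$ is odd. *)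

(* Defs.v *)
From Stdlib Require Import Bool ZArith Znumtheory.
Open Scope Z_scope.
Open Scope bool_scope.

Definition modt (t : nat) : Z := 3 * 2 ^ (Z.of_nat t + 1).

Definition chi (t : nat) (n : Z) : Z :=
  let M := modt t in
  let r := n mod M in
  let a := 2 ^ (Z.of_nat t + 1) in
  let b := 2 ^ (Z.of_nat t + 2) in
  if Z.eqb r ((a - 3) mod M) || Z.eqb r ((3 + b) mod M) then 1
  else if Z.eqb r ((a + 3) mod M) || Z.eqb r ((b - 3) mod M) then -1
  else 0.

Definition r1 (t : nat) : Z :=
  if Nat.even t then 2 ^ (Z.of_nat t + 1) - 1 else 2 ^ (Z.of_nat t + 1) + 1.
Definition r2 (t : nat) : Z :=
  if Nat.even t then 2 ^ (Z.of_nat t + 2) + 1 else 2 ^ (Z.of_nat t + 2) - 1.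

Definition inP1 (t : nat) (p : Z) : Prop := prime p /\ p mod modt t = 1 mod modt t.
Definition inP2 (t : nat) (p : Z) : Prop := prime p /\ p mod modt t = (modt t - 1) mod modt t.
Definition inP3 (t : nat) (p : Z) : Prop := prime p /\ p mod modt t = r1 t mod modt t.
Definition inP4 (t : nat) (p : Z) : Prop := prime p /\ p mod modt t = r2 t mod modt t.

(* Main.v *)
Require Import Defs.
From Stdlib Require Import ZArith Znumtheory Lia Bool.
Open Scope Z_scope.

Definition g (a r : Z) : Z :=
  if (r =? a-3) || (r =? 3+2*a) then 1
  else if (r =? a+3) || (r =? 2*a-3) then -1 else 0.

Lemma modeq (a X r j : Z) : 0 <= r < 3*a -> X = j*(3*a) + r -> X mod (3*a) = r.
Proof. intros Hr ->. rewrite Z.add_comm, Z.mod_add by lia. apply Z.mod_small; lia. Qed.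

Ltac dsp := repeat match goal with |- context [?x =? ?y] => destruct (Z.eqb_spec x y) end.
Ltac gsolve := unfold g; dsp; cbv beta iota delta [orb]; lia.
Lemma gv1 a : 8 <= a -> g a (a-3) = 1. Proof. intros; gsolve. Qed.
Lemma gv2 a : 8 <= a -> g a (3+2*a) = 1. Proof. intros; gsolve. Qed.
Lemma gv3 a : 8 <= a -> g a (a+3) = -1. Proof. intros; gsolve. Qed.
Lemma gv4 a : 8 <= a -> g a (2*a-3) = -1. Proof. intros; gsolve. Qed.
Lemma gS a x : g a x <> 0 -> x = a-3 \/ x = 3+2*a \/ x = a+3 \/ x = 2*a-3.
Proof. unfold g; dsp; cbv beta iota delta [orb]; intros; lia. Qed.

Ltac gvals := rewrite ?gv1, ?gv2, ?gv3, ?gv4 by lia; reflexivity.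
Lemma core_1_0 a k x : a = 3*k+1 -> 8 <= a -> (x = a-3 \/ x = 3+2*a \/ x = a+3 \/ x = 2*a-3) -> g a ((x*(1)) mod (3*a)) = (1) * g a x.
Proof. intros Ha H8 [ -> | [ -> | [ -> | -> ] ] ].
- rewrite (modeq a _ (a-3) (0*k+(0))) by (lia || (rewrite Ha; ring)). gvals.
- rewrite (modeq a _ (3+2*a) (0*k+(0))) by (lia || (rewrite Ha; ring)). gvals.
- rewrite (modeq a _ (a+3) (0*k+(0))) by (lia || (rewrite Ha; ring)). gvals.
- rewrite (modeq a _ (2*a-3) (0*k+(0))) by (lia || (rewrite Ha; ring)). gvals.
Qed.
Lemma sq_1_0 a k : a = 3*k+1 -> 8 <= a -> ((1)*(1)) mod (3*a) = 1.
Proof. intros Ha H8. apply (modeq a _ 1 (0*k+(0))); [lia | rewrite Ha; ring]. Qed.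
Lemma core_1_1 a k x : a = 3*k+1 -> 8 <= a -> (x = a-3 \/ x = 3+2*a \/ x = a+3 \/ x = 2*a-3) -> g a ((x*(3*a-1)) mod (3*a)) = (1) * g a x.
Proof. intros Ha H8 [ -> | [ -> | [ -> | -> ] ] ].
- rewrite (modeq a _ (3+2*a) (3*k+(-3))) by (lia || (rewrite Ha; ring)). gvals.
- rewrite (modeq a _ (a-3) (6*k+(4))) by (lia || (rewrite Ha; ring)). gvals.
- rewrite (modeq a _ (2*a-3) (3*k+(3))) by (lia || (rewrite Ha; ring)). gvals.
- rewrite (modeq a _ (a+3) (6*k+(-2))) by (lia || (rewrite Ha; ring)). gvals.
Qed.
Lemma sq_1_1 a k : a = 3*k+1 -> 8 <= a -> ((3*a-1)*(3*a-1)) mod (3*a) = 1.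
Proof. intros Ha H8. apply (modeq a _ 1 (9*k+(1))); [lia | rewrite Ha; ring]. Qed.
Lemma core_1_2 a k x : a = 3*k+1 -> 8 <= a -> (x = a-3 \/ x = 3+2*a \/ x = a+3 \/ x = 2*a-3) -> g a ((x*(a+1)) mod (3*a)) = (-1) * g a x.
Proof. intros Ha H8 [ -> | [ -> | [ -> | -> ] ] ].
- rewrite (modeq a _ (2*a-3) (1*k+(-1))) by (lia || (rewrite Ha; ring)). gvals.
- rewrite (modeq a _ (a+3) (2*k+(2))) by (lia || (rewrite Ha; ring)). gvals.
- rewrite (modeq a _ (3+2*a) (1*k+(1))) by (lia || (rewrite Ha; ring)). gvals.
- rewrite (modeq a _ (a-3) (2*k+(0))) by (lia || (rewrite Ha; ring)). gvals.
Qed.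
Lemma sq_1_2 a k : a = 3*k+1 -> 8 <= a -> ((a+1)*(a+1)) mod (3*a) = 1.
Proof. intros Ha H8. apply (modeq a _ 1 (1*k+(1))); [lia | rewrite Ha; ring]. Qed.
Lemma core_1_3 a k x : a = 3*k+1 -> 8 <= a -> (x = a-3 \/ x = 3+2*a \/ x = a+3 \/ x = 2*a-3) -> g a ((x*(2*a-1)) mod (3*a)) = (-1) * g a x.
Proof. intros Ha H8 [ -> | [ -> | [ -> | -> ] ] ].
- rewrite (modeq a _ (a+3) (2*k+(-2))) by (lia || (rewrite Ha; ring)). gvals.
- rewrite (modeq a _ (2*a-3) (4*k+(2))) by (lia || (rewrite Ha; ring)). gvals.
- rewrite (modeq a _ (a-3) (2*k+(2))) by (lia || (rewrite Ha; ring)). gvals.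
- rewrite (modeq a _ (3+2*a) (4*k+(-2))) by (lia || (rewrite Ha; ring)). gvals.
Qed.
Lemma sq_1_3 a k : a = 3*k+1 -> 8 <= a -> ((2*a-1)*(2*a-1)) mod (3*a) = 1.
Proof. intros Ha H8. apply (modeq a _ 1 (4*k+(0))); [lia | rewrite Ha; ring]. Qed.
Lemma core_2_0 a k x : a = 3*k+2 -> 8 <= a -> (x = a-3 \/ x = 3+2*a \/ x = a+3 \/ x = 2*a-3) -> g a ((x*(1)) mod (3*a)) = (1) * g a x.
Proof. intros Ha H8 [ -> | [ -> | [ -> | -> ] ] ].
- rewrite (modeq a _ (a-3) (0*k+(0))) by (lia || (rewrite Ha; ring)). gvals.
- rewrite (modeq a _ (3+2*a) (0*k+(0))) by (lia || (rewrite Ha; ring)). gvals.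
- rewrite (modeq a _ (a+3) (0*k+(0))) by (lia || (rewrite Ha; ring)). gvals.
- rewrite (modeq a _ (2*a-3) (0*k+(0))) by (lia || (rewrite Ha; ring)). gvals.
Qed.
Lemma sq_2_0 a k : a = 3*k+2 -> 8 <= a -> ((1)*(1)) mod (3*a) = 1.
Proof. intros Ha H8. apply (modeq a _ 1 (0*k+(0))); [lia | rewrite Ha; ring]. Qed.
Lemma core_2_1 a k x : a = 3*k+2 -> 8 <= a -> (x = a-3 \/ x = 3+2*a \/ x = a+3 \/ x = 2*a-3) -> g a ((x*(3*a-1)) mod (3*a)) = (1) * g a x.
Proof. intros Ha H8 [ -> | [ -> | [ -> | -> ] ] ].
- rewrite (modeq a _ (3+2*a) (3*k+(-2))) by (lia || (rewrite Ha; ring)). gvals.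
- rewrite (modeq a _ (a-3) (6*k+(6))) by (lia || (rewrite Ha; ring)). gvals.
- rewrite (modeq a _ (2*a-3) (3*k+(4))) by (lia || (rewrite Ha; ring)). gvals.
- rewrite (modeq a _ (a+3) (6*k+(0))) by (lia || (rewrite Ha; ring)). gvals.
Qed.
Lemma sq_2_1 a k : a = 3*k+2 -> 8 <= a -> ((3*a-1)*(3*a-1)) mod (3*a) = 1.
Proof. intros Ha H8. apply (modeq a _ 1 (9*k+(4))); [lia | rewrite Ha; ring]. Qed.
Lemma core_2_2 a k x : a = 3*k+2 -> 8 <= a -> (x = a-3 \/ x = 3+2*a \/ x = a+3 \/ x = 2*a-3) -> g a ((x*(a-1)) mod (3*a)) = (-1) * g a x.
Proof. intros Ha H8 [ -> | [ -> | [ -> | -> ] ] ].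
- rewrite (modeq a _ (a+3) (1*k+(-1))) by (lia || (rewrite Ha; ring)). gvals.
- rewrite (modeq a _ (2*a-3) (2*k+(1))) by (lia || (rewrite Ha; ring)). gvals.
- rewrite (modeq a _ (a-3) (1*k+(1))) by (lia || (rewrite Ha; ring)). gvals.
- rewrite (modeq a _ (3+2*a) (2*k+(-1))) by (lia || (rewrite Ha; ring)). gvals.
Qed.
Lemma sq_2_2 a k : a = 3*k+2 -> 8 <= a -> ((a-1)*(a-1)) mod (3*a) = 1.
Proof. intros Ha H8. apply (modeq a _ 1 (1*k+(0))); [lia | rewrite Ha; ring]. Qed.
Lemma core_2_3 a k x : a = 3*k+2 -> 8 <= a -> (x = a-3 \/ x = 3+2*a \/ x = a+3 \/ x = 2*a-3) -> g a ((x*(2*a+1)) mod (3*a)) = (-1) * g a x.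
Proof. intros Ha H8 [ -> | [ -> | [ -> | -> ] ] ].
- rewrite (modeq a _ (2*a-3) (2*k+(-1))) by (lia || (rewrite Ha; ring)). gvals.
- rewrite (modeq a _ (a+3) (4*k+(5))) by (lia || (rewrite Ha; ring)). gvals.
- rewrite (modeq a _ (3+2*a) (2*k+(3))) by (lia || (rewrite Ha; ring)). gvals.
- rewrite (modeq a _ (a-3) (4*k+(1))) by (lia || (rewrite Ha; ring)). gvals.
Qed.
Lemma sq_2_3 a k : a = 3*k+2 -> 8 <= a -> ((2*a+1)*(2*a+1)) mod (3*a) = 1.
Proof. intros Ha H8. apply (modeq a _ 1 (4*k+(4))); [lia | rewrite Ha; ring]. Qed.

Lemma a_ge8 (t : nat) : (2 <= t)%nat -> 8 <= 2 ^ (Z.of_nat t + 1).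
Proof. intros. change 8 with (2^3). apply Z.pow_le_mono_r; lia. Qed.

Lemma pow2_even (n : nat) : exists k, 2 ^ (Z.of_nat n) = 3*k + (if Nat.even n then 1 else 2).
Proof.
  induction n as [|n [k IH]].
  - exists 0. reflexivity.
  - rewrite Nat.even_succ, <- Nat.negb_even. rewrite Nat2Z.inj_succ, Z.pow_succ_r by lia.
    rewrite IH. destruct (Nat.even n); cbn [negb].
    + exists (2*k). ring.
    + exists (2*k+1). ring.
Qed.

Lemma chi_g (t : nat) (n : Z) : (2 <= t)%nat ->
  chi t n = g (2 ^ (Z.of_nat t + 1)) (n mod (3 * 2 ^ (Z.of_nat t + 1))).
Proof.
  intros Ht. pose proof (a_ge8 t Ht) as H8.
  unfold chi, modt, g.
  replace (Z.of_nat t + 2) with (Z.succ (Z.of_nat t + 1)) by lia.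
  rewrite Z.pow_succ_r by lia.
  set (a := 2 ^ (Z.of_nat t + 1)) in *.
  rewrite (Z.mod_small (a-3)), (Z.mod_small (3 + 2*a)), (Z.mod_small (a+3)), (Z.mod_small (2*a-3)) by lia.
  reflexivity.
Qed.

Theorem lemma4p6 (t : nat) (p : Z) :
  (2 <= t)%nat ->
  (inP1 t p \/ inP2 t p \/ inP3 t p \/ inP4 t p) ->
  forall m : Z, chi t (m * p) <> 0 ->
    ((inP1 t p \/ inP2 t p) -> chi t (m * p) = chi t m) /\
    ((inP3 t p \/ inP4 t p) -> chi t (m * p) = - chi t m).
Proof.
  intros Ht _ m Hnz.
  pose proof (a_ge8 t Ht) as H8.
  rewrite !chi_g in * by exact Ht.
  unfold inP1, inP2, inP3, inP4, r1, r2, modt.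
  replace (Z.of_nat t + 2) with (Z.succ (Z.of_nat t + 1)) by lia.
  rewrite Z.pow_succ_r by lia.
  destruct (pow2_even (S t)) as [k Hk].
  rewrite Nat2Z.inj_succ, <- Z.add_1_r, Nat.even_succ, <- Nat.negb_even in Hk.
  set (a := 2 ^ (Z.of_nat t + 1)) in *.
  set (x := (m * p) mod (3*a)) in *.
  set (q := p mod (3*a)).
  assert (Hy : forall (Hsq : (q*q) mod (3*a) = 1), m mod (3*a) = (x*q) mod (3*a)).
  { intros Hsq. unfold x, q in *.
    rewrite Z.mul_mod_idemp_l, Z.mul_mod_idemp_r by lia.
    rewrite <- Z.mul_assoc, <- Z.mul_mod_idemp_r by lia.
    rewrite <- Z.mul_mod in Hsq by lia. rewrite Hsq, Z.mul_1_r. reflexivity. }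
  pose proof (gS a x Hnz) as HS.
  rewrite (Z.mod_small 1), (Z.mod_small (3*a-1)) by lia.
  destruct (Nat.even t); cbn [negb] in Hk;
    rewrite ?(Z.mod_small (a-1)), ?(Z.mod_small (a+1)), ?(Z.mod_small (2*a+1)), ?(Z.mod_small (2*a-1)) by lia;
    split; (intros [[_ Hq]|[_ Hq]]; fold q in Hq; rewrite Hq in Hy).
  all: rewrite Hy by (first [ exact (sq_1_0 a k Hk H8) | exact (sq_1_1 a k Hk H8) | exact (sq_1_2 a k Hk H8) | exact (sq_1_3 a k Hk H8) | exact (sq_2_0 a k Hk H8) | exact (sq_2_1 a k Hk H8) | exact (sq_2_2 a k Hk H8) | exact (sq_2_3 a k Hk H8) ]); first [ rewrite (core_1_0 a k x Hk H8 HS) | rewrite (core_1_1 a k x Hk H8 HS) | rewrite (core_1_2 a k x Hk H8 HS) | rewrite (core_1_3 a k x Hk H8 HS) | rewrite (core_2_0 a k x Hk H8 HS) | rewrite (core_2_1 a k x Hk H8 HS) | rewrite (core_2_2 a k x Hk H8 HS) | rewrite (core_2_3 a k x Hk H8 HS) ]; lia.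
Qed.
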